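(* Let $G=(V,E_1,\dots,E_k)$ be a complete edge-colored graph. If every monochromatic subgraph $G_{|i}$ of $G$ is a simple permutation graph (each with respect to some labeling, possibly depending on $i$) and $G$ does not contain a rainbow triangle, then $G$ is a complete edge-colored permutation graph.
   Context: A complete $k$-edge-colored graph $G=(V,E_1,\dots,E_k)$ is the complete graph on a finite set $V$ with edges partitioned into $k$ nonempty color classes $E_i$ (the one-vertex graph also counts); $G_{|i}=(V,E_i)$. A labeling is a bijection $\ell:V\to\{1,\dots,|V|\}$. A graph $(V,E)$ with labeling $\ell$ is a simple permutation graph of a permutation $\pi$ if for all $u,v$ with $\ell(u)>\ell(v)$: $\{u,v\}\in E$ iff $\pi^{-1}(\ell(u))<\pi^{-1}(\ell(v))$; a graph is a simple permutation graph if such $\ell$ and $\pi$ exist. $G$ is a complete edge-colored permutation graph if there exist a single labeling $\ell$ and permutations $\pi_1,\dots,\pi_k$ with $(G_{|i},\ell)$ a simple permutation graph of $\pi_i$ for all $i$. A rainbow triangle is a set of three vertices whose three edges have pairwise distinct colors. *)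

(* Defs.v *)
From mathcomp Require Import all_boot all_fingroup.
Set Implicit Arguments. Unset Strict Implicit. Unset Printing Implicit Defensive.

(* A complete k-edge-colored graph on the finite vertex type V: a colouring
   c u v : 'I_k of every unordered pair {u,v}, u <> v (c is symmetric, its
   value on the diagonal is irrelevant), and each colour class is nonempty
   (except in the one-vertex graph, which has no edges). *)
Definition complete_edge_colored (V : finType) (k : nat) (c : V -> V -> 'I_k) : Prop :=
  (forall u v : V, u != v -> c u v = c v u) /\
  (1 < #|V| -> forall i : 'I_k, exists u v : V, u != v /\ c u v = i).

(* A labeling: a bijection V -> {1..|V|}, represented with values 0..|V|-1. *)
Definition labeling (V : finType) (l : V -> 'I_#|V|) : Prop := bijective l.

Definition simple_perm_graph_of (V : finType) (E : V -> V -> bool)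
    (l : V -> 'I_#|V|) (pi : 'S_#|V|) : Prop :=
  forall u v : V, l v < l u ->
    (E u v <-> (pi^-1)%g (l u) < (pi^-1)%g (l v)).

Definition simple_perm_graph (V : finType) (E : V -> V -> bool) : Prop :=
  exists l : V -> 'I_#|V|, labeling l /\ exists pi : 'S_#|V|, simple_perm_graph_of E l pi.

Definition color_class (V : finType) (k : nat) (c : V -> V -> 'I_k) (i : 'I_k) : V -> V -> bool :=
  fun u v => (u != v) && (c u v == i).

Definition complete_edge_colored_perm_graph (V : finType) (k : nat) (c : V -> V -> 'I_k) : Prop :=
  exists l : V -> 'I_#|V|, labeling l /\
    forall i : 'I_k, exists pi : 'S_#|V|, simple_perm_graph_of (color_class c i) l pi.

Definition rainbow_triangle (V : finType) (k : nat) (c : V -> V -> 'I_k) (x y z : V) : Prop :=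
  [/\ x != y, y != z, x != z &
      [/\ c x y != c y z, c y z != c x z & c x y != c x z]].

(* Main.v *)
Require Import Defs.
From mathcomp Require Import all_boot all_fingroup.
From mathcomp Require Import zify.
From Stdlib Require Import Classical.
Set Implicit Arguments. Unset Strict Implicit. Unset Printing Implicit Defensive.

Definition symc (V : finType) k (c : V -> V -> 'I_k) :=
  forall u v, u != v -> c u v = c v u.
Definition nrb (V : finType) k (c : V -> V -> 'I_k) :=
  forall x y z, x != y -> y != z -> x != z ->
    c x y = c y z \/ c y z = c x z \/ c x y = c x z.
Definition emod (V : finType) k (c : V -> V -> 'I_k) (S : {set V}) (col : 'I_k) : rel V :=
  fun x y => [&& x \in S, y \in S, x != y & c x y == col].
Definition ismod (V : finType) k (c : V -> V -> 'I_k) (S M : {set V}) :=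
  forall w x y, w \in S -> w \notin M -> x \in M -> y \in M -> c w x = c w y.
Definition good (V : finType) k (c : V -> V -> 'I_k) (S : {set V}) (r : V -> nat) :=
  (forall x y, x \in S -> y \in S -> x != y -> r x != r y) /\
  (forall x y z, x \in S -> y \in S -> z \in S -> r x < r y -> r y < r z ->
     c x y = c y z -> c x z = c x y).
Definition allconn (V : finType) k (c : V -> V -> 'I_k) (S : {set V}) :=
  forall col x0 y0 z, emod c S col x0 y0 -> z \in S -> connect (emod c S col) x0 z.
Definition used (V : finType) k (c : V -> V -> 'I_k) (S : {set V}) col :=
  exists x y, emod c S col x y.
Definition three (V : finType) k (c : V -> V -> 'I_k) (S : {set V}) :=
  exists a1 a2 a3, [/\ used c S a1, used c S a2, used c S a3 &
     [/\ a1 != a2, a2 != a3 & a1 != a3]].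

Lemma connect_closed (T : finType) (e : rel T) (P : pred T) x y :
  (forall a b, P a -> e a b -> P b) -> P x -> connect e x y -> P y.
Proof.
move=> cl Px /connectP [p pth ->]; elim: p x Px pth => //= a p IH x Px /andP [exa pth].
exact: IH (cl _ _ Px exa) pth.
Qed.

Lemma nrb_of (V : finType) k (c : V -> V -> 'I_k) :
  ~ (exists x y z, rainbow_triangle c x y z) -> nrb c.
Proof.
move=> H x y z xy yz xz.
case: (eqVneq (c x y) (c y z)) => [-> | h1]; first by left.
case: (eqVneq (c y z) (c x z)) => [-> | h2]; first by right; left.
case: (eqVneq (c x y) (c x z)) => [-> | h3]; first by right; right.
by exfalso; apply: H; exists x, y, z; split.
Qed.

Lemma emod_sym (V : finType) k (c : V -> V -> 'I_k) (S : {set V}) (col : 'I_k) :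
  symc c -> symmetric (emod c S col).
Proof.
move=> hs x y; rewrite /emod; case: (eqVneq x y) => [-> //| xy].
rewrite (hs _ _ xy) eq_sym; by case: (x \in S); case: (y \in S).
Qed.

Lemma conn_sub (V : finType) k (c : V -> V -> 'I_k) (S : {set V}) (col : 'I_k) (x y : V) :
  x \in S -> connect (emod c S col) x y -> y \in S.
Proof.
move=> xS; apply: connect_closed xS => a b _ /and4P [].
by [].
Qed.

Lemma comp_mod (V : finType) k (c : V -> V -> 'I_k) (S : {set V}) (col : 'I_k) (x0 : V) :
  symc c -> nrb c -> ismod c S [set y | connect (emod c S col) x0 y].
Proof.
move=> hs hn.
set e := emod c S col.
suff key: forall w y, w \in S -> ~~ connect e x0 w -> connect e x0 y -> c w y = c w x0.
  move=> w x y wS; rewrite !inE => wn hx hy.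
  by rewrite (key w x) // (key w y).
move=> w y wS wn.
have P : connect e x0 y -> (connect e x0 y) && (c w y == c w x0).
  apply: (connect_closed (P := fun a => connect e x0 a && (c w a == c w x0))).
  - move=> a b /andP [ha /eqP hca] eab; apply/andP; split.
      by apply: connect_trans ha (connect1 eab).
    have hb : connect e x0 b by apply: connect_trans ha (connect1 eab).
    move: (eab) => /and4P [aS bS ab /eqP cab].
    have wa : w != a by apply: contraNneq wn => ->.
    have wb : w != b by apply: contraNneq wn => ->.
    have cwa : c w a != col.
      apply: contraNneq wn => h; apply: connect_trans ha (connect1 _).
      by rewrite /e /emod aS wS (eq_sym a w) wa /= (hs a w) ?h // eq_sym.
    have cwb : c w b != col.
      apply: contraNneq wn => h; apply: connect_trans hb (connect1 _).
      by rewrite /e /emod bS wS (eq_sym b w) wb /= (hs b w) ?h // eq_sym.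
    case: (hn w a b wa ab wb) => [h | [h | h]].
    + by rewrite h cab eqxx in cwa.
    + by rewrite -h cab eqxx in cwb.
    + by rewrite -h hca.
  - by rewrite connect0 eqxx.
by move=> h; case/andP: (P h) => _ /eqP.
Qed.

Lemma csym (V : finType) k (c : V -> V -> 'I_k) (S : {set V}) (col : 'I_k) (x y : V) :
  symc c -> connect (emod c S col) x y = connect (emod c S col) y x.
Proof. by move=> hs; apply: sym_connect_sym; apply: emod_sym. Qed.

Lemma sees (V : finType) k (c : V -> V -> 'I_k) (S : {set V}) (col : 'I_k) (v : V) :
  symc c -> allconn c S -> used c S col -> v \in S -> exists u, emod c S col v u.
Proof.
move=> hs hc [x0 [y0 e0]] vS.
have h := hc col x0 y0 v e0 vS.
have : [exists u, emod c S col v u].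
  apply: (connect_closed (P := fun a => [exists u, emod c S col a u])) h.
  - by move=> a b _ eab; apply/existsP; exists a; rewrite emod_sym.
  - by apply/existsP; exists y0.
by case/existsP => u hu; exists u.
Qed.

Lemma emod_in (V : finType) k (c : V -> V -> 'I_k) (S : {set V}) (col : 'I_k) (x y : V) :
  emod c S col x y -> [/\ x \in S, y \in S, x != y & c x y = col].
Proof. by case/and4P => a b d /eqP e. Qed.

Lemma lemmaL (V : finType) k (c : V -> V -> 'I_k) :
  symc c -> nrb c ->
  forall n (S : {set V}), #|S| <= n -> allconn c S -> ~ three c S.
Proof.
move=> hs hn; elim=> [|n IH] S hcard hc [a1 [a2 [a3 [u1 u2 u3 [d12 d23 d13]]]]].
  case: u1 => x [y /emod_in [xS _ _ _]].
  have : 0 < #|S| by apply/card_gt0P; exists x.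
  by rewrite leqn0 in hcard; rewrite (eqP hcard).
case: (u1) => v [yy1 /emod_in [vS _ _ _]].
have seesv := fun col (h : used c S col) => sees hs hc h vS.
set S' := S :\ v.
have S'S : forall x, x \in S' -> x \in S by move=> x; rewrite inE => /andP [].
have vS' : v \notin S' by rewrite !inE eqxx.
have inS' : forall x, x \in S -> x != v -> x \in S' by move=> x xS xv; rewrite !inE xv xS.
have cS' : #|S'| <= n.
  by move: hcard; rewrite (cardsD1 v S) vS.
have usedS' : forall al be, used c S al -> used c S be -> al != be -> used c S' al.
  move=> al be ual ube ab.
  case: (seesv be ube) => u /emod_in [_ uS vu cvu].
  case: (sees hs hc ual uS) => w /emod_in [_ wS uw cuw].
  exists u, w; apply/and4P; split => //.
  - by apply: inS' => //; rewrite eq_sym.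
  - apply: inS' => //; apply: contraNneq ab => wv.
    by rewrite -cuw -cvu wv; apply/eqP; apply: hs; rewrite eq_sym.
  - by rewrite cuw.
have th' : three c S'.
  exists a1, a2, a3; split; [exact: usedS' u1 u2 d12 | exact: usedS' u2 u3 d23 |
     apply: usedS' u3 u1 _; by rewrite eq_sym | by split].
have nac : ~ allconn c S' by move=> h; exact: IH S' cS' h th'.
have [col [x0 [y0 [z [e0 [zS' nz]]]]]] : exists col x0 y0 z,
    emod c S' col x0 y0 /\ z \in S' /\ ~ connect (emod c S' col) x0 z.
  apply: NNPP => H; apply: nac => col x0 y0 z h1 h2; apply: NNPP => h3.
  by apply: H; exists col, x0, y0, z.
set e' := emod c S' col.
have [x0S' y0S' x0y0 cx0y0] := emod_in e0.
have e0S : emod c S col x0 y0.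
  by apply/and4P; split => //; [exact: S'S | exact: S'S | rewrite cx0y0].
have F1 : forall y, y \in S' -> exists y1, connect e' y y1 /\ c v y1 = col.
  move=> y yS'; apply: NNPP => H.
  have hyv : connect (emod c S col) y v.
    apply: connect_trans (hc col x0 y0 v e0S vS).
    by rewrite csym //; apply: hc e0S (S'S _ yS').
  have : connect e' y v.
    apply: (connect_closed (P := fun a => connect e' y a)) hyv; last exact: connect0.
    move=> a b ha /emod_in [aS bS ab cab].
    have aS' : a \in S' by apply: conn_sub ha.
    case: (eqVneq b v) => [bv | bv].
      exfalso; apply: H; exists a; split => //.
      by rewrite -cab bv hs //; apply: contraNneq vS' => ->.
    apply: connect_trans ha (connect1 _).
    by apply/and4P; split => //; [exact: inS' | rewrite cab].
  by move/(conn_sub yS'); rewrite (negbTE vS').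
have F3 : forall p y be, p \in S' -> c v p = be -> be != col -> y \in S' ->
    ~~ connect e' p y -> c p y = be.
  move=> p y be pS' cvp bc yS' npy.
  case: (F1 y yS') => y1 [hyy1 cvy1].
  have y1S' : y1 \in S' by apply: conn_sub hyy1.
  have npy1 : ~~ connect e' p y1.
    apply: contra npy => h; apply: connect_trans h _; by rewrite csym.
  have py1 : p != y1 by apply: contraNneq npy1 => ->; exact: connect0.
  have cpy1 : c p y1 != col.
    apply: contra npy1 => h; apply: connect1; apply/and4P; split => //.
  have vp : v != p by apply: contraNneq vS' => ->.
  have vy1 : v != y1 by apply: contraNneq vS' => ->.
  have cpy1b : c p y1 = be.
    case: (hn v p y1 vp py1 vy1) => [h | [h | h]].
    - by rewrite -h.
    - by rewrite h cvy1 eqxx in cpy1.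
    - by rewrite -cvp -cvy1 h eqxx in bc.
  rewrite -cpy1b; apply: (comp_mod (S := S') (col := col) (x0 := y) hs hn pS').
  - by rewrite inE; apply: contra npy => h; rewrite csym.
  - by rewrite inE connect0.
  - by rewrite inE.
have [be [de [ube ude bd bc dc]]] : exists be de,
    [/\ used c S be, used c S de, be != de, be != col & de != col].
  case: (eqVneq col a1) => [e1 | c1].
    by exists a2, a3; split => //; rewrite e1 // eq_sym.
  case: (eqVneq col a2) => [e2 | c2].
    by exists a1, a3; split => //; rewrite e2 // eq_sym.
  by exists a1, a2; split => //; rewrite eq_sym.
case: (seesv be ube) => p /emod_in [_ pS vp cvp].
case: (seesv de ude) => q /emod_in [_ qS vq cvq].
have pS' : p \in S' by apply: inS' => //; rewrite eq_sym.
have qS' : q \in S' by apply: inS' => //; rewrite eq_sym.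
case: (boolP (connect e' p q)) => hpq.
  have [y [yS' npy]] : exists y, y \in S' /\ ~~ connect e' p y.
    case: (boolP (connect e' p x0)) => h.
      exists z; split => //; apply/negP => h'; apply: nz.
      by apply: connect_trans h'; rewrite csym.
    by exists x0.
  have nqy : ~~ connect e' q y by apply: contra npy => h; apply: connect_trans hpq h.
  have e1 := F3 p y be pS' cvp bc yS' npy.
  have e2 := F3 q y de qS' cvq dc yS' nqy.
  have py : p != y by apply: contraNneq npy => ->; exact: connect0.
  have qy : q != y by apply: contraNneq nqy => ->; exact: connect0.
  have := comp_mod (S := S') (col := col) (x0 := p) hs hn yS'.
  move=> /(_ p q); rewrite !inE connect0 => /(_ npy isT hpq).
  rewrite -(hs _ _ py) -(hs _ _ qy) e1 e2 => h.
  by rewrite h eqxx in bd.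
have e1 := F3 p q be pS' cvp bc qS' hpq.
have nqp : ~~ connect e' q p by rewrite csym.
have e2 := F3 q p de qS' cvq dc pS' nqp.
have pq : p != q by apply: contraNneq hpq => ->; exact: connect0.
by rewrite (hs _ _ pq) e2 in e1; rewrite e1 eqxx in bd.
Qed.

Lemma twocol (V : finType) k (c : V -> V -> 'I_k) :
  symc c -> (forall i, simple_perm_graph (color_class c i)) ->
  forall S : {set V}, ~ three c S -> exists r, good c S r.
Proof.
move=> hs HP S nth.
case: (boolP [exists x, exists y, [&& x \in S, y \in S & x != y]]); last first.
  move=> /existsPn hno; exists (fun _ => 0); split => // x y xS yS xy.
  by move: (hno x) => /existsPn /(_ y); rewrite xS yS xy.
case/existsP => x0 /existsP [y0 /and3P [x0S y0S x0y0]].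
set a := c x0 y0.
case: (HP a) => l [lab [pi hpi]].
have linj : injective l by apply: bij_inj.
set q := fun u => (pi^-1)%g (l u).
have qinj : forall u v, q u = q v -> u = v.
  by move=> u v /perm_inj /linj.
have hq : forall u v, l v < l u -> (u != v) && (c u v == a) = (q u < q v).
  by move=> u v h; apply/idP/idP => /(hpi u v h).
exists (fun x => val (l x)); split.
  move=> x y _ _ xy; apply: contra xy => /eqP h; apply/eqP; apply: linj; exact: val_inj.
move=> x y z xS yS zS lxy lyz cxy.
have xy : x != y by apply: contraTneq lxy => ->; rewrite ltnn.
have yz : y != z by apply: contraTneq lyz => ->; rewrite ltnn.
have lxz : l x < l z := ltn_trans lxy lyz.
have xz : x != z by apply: contraTneq lxz => ->; rewrite ltnn.
have h1 := hq y x lxy. have h2 := hq z y lyz. have h3 := hq z x lxz.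
rewrite eq_sym in xy; rewrite eq_sym in yz; rewrite eq_sym in xz.
rewrite xy yz xz /= in h1 h2 h3.
rewrite (hs _ _ xy) in h1. rewrite (hs _ _ yz) -cxy in h2. rewrite (hs _ _ xz) in h3.
case: (eqVneq (c x y) a) => [ea | na].
  have : q z < q x by apply: ltn_trans (_ : q z < q y) _; [rewrite -h2 ea | rewrite -h1 ea].
  by rewrite -h3 => /eqP ->.
have qxy : q x < q y.
  rewrite ltn_neqAle; apply/andP; split.
    by apply/negP => /eqP /val_inj /qinj e; rewrite e eqxx in xy.
  by rewrite leqNgt -h1 (negbTE na).
have qyz : q y < q z.
  rewrite ltn_neqAle; apply/andP; split.
    by apply/negP => /eqP /val_inj /qinj e; rewrite e eqxx in yz.
  by rewrite leqNgt -h2 (negbTE na).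
have nxz : c x z != a.
  by move: (ltn_trans qxy qyz); rewrite ltnNge leq_eqVlt h3 negb_or => /andP [_ /negbTE ->].
case: (eqVneq (c x z) (c x y)) => // ne.
exfalso; apply: nth; exists a, (c x y), (c x z); split.
- by exists x0, y0; rewrite /emod x0S y0S x0y0 eqxx.
- by exists x, y; rewrite /emod xS yS eqxx andbT eq_sym xy.
- by exists x, z; rewrite /emod xS zS eqxx andbT eq_sym xz.
- by split; rewrite // eq_sym.
Qed.

Lemma mixdiv A d K : 0 < K -> d < K -> (A * K + d) %/ K = A.
Proof. by move=> K0 dK; rewrite divnMDl // divn_small // addn0. Qed.

Lemma combine (V : finType) k (c : V -> V -> 'I_k) (S M : {set V}) (x0 : V) rM r' :
  symc c -> M \subset S -> x0 \in M -> ismod c S M ->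
  good c M rM -> good c ((S :\: M) :|: [set x0]) r' -> exists r, good c S r.
Proof.
move=> hs MS x0M hm [gMi gMt] [g'i g't].
set S' := (S :\: M) :|: [set x0].
set K := (\max_(x in M) rM x).+1.
have K0 : 0 < K by [].
set d := fun x => if x \in M then rM x else 0.
have dK : forall x, d x < K.
  move=> x; rewrite /d; case: ifP => // xM.
  by rewrite ltnS; apply: (leq_bigmax_cond (P := fun x => x \in M)).
set ph := fun x => if x \in M then x0 else x.
have phS : forall x, x \in S -> ph x \in S'.
  move=> x xS; rewrite /ph /S' !inE; case: ifP => xM; first by rewrite eqxx orbT.
  by rewrite xM xS.
have phne : forall x y, x != y -> ~~ ((x \in M) && (y \in M)) -> ph x != ph y.
  move=> x y xy; rewrite /ph; case: ifP => xM; case: ifP => yM //= _.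
  - by apply/eqP => e; rewrite -e x0M in yM.
  - by apply/eqP => e; rewrite e x0M in xM.
have cph : forall x y, x \in S -> y \in S -> x != y -> ~~ ((x \in M) && (y \in M)) ->
    c (ph x) (ph y) = c x y.
  move=> x y xS yS xy; rewrite /ph; case: ifP => xM; case: ifP => yM //= _.
  - have x0y : x0 != y by apply/eqP => e; rewrite -e x0M in yM.
    by rewrite (hs _ _ x0y) (hm y x0 x yS (negbT yM) x0M xM) hs // eq_sym.
  - by rewrite (hm x x0 y xS (negbT xM) x0M yM).
set r := fun x => r' (ph x) * K + d x.
have rle : forall x y, r x < r y -> r' (ph x) <= r' (ph y).
  move=> x y h; rewrite -(mixdiv (r' (ph x)) K0 (dK x)) -(mixdiv (r' (ph y)) K0 (dK y)).
  by apply: leq_div2r; apply: ltnW.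
have rlt : forall x y, x \in S -> y \in S -> r x < r y -> ~~ ((x \in M) && (y \in M)) ->
    r' (ph x) < r' (ph y).
  move=> x y xS yS h nb.
  have xy : x != y by apply: contraTneq h => ->; rewrite ltnn.
  rewrite ltn_neqAle rle // andbT; apply: g'i; [exact: phS | exact: phS | exact: phne].
have rM2 : forall x y, x \in M -> y \in M -> r x < r y -> rM x < rM y.
  by move=> x y xM yM; rewrite /r /ph /d xM yM ltn_add2l.
exists r; split.
  move=> x y xS yS xy; apply/negP => /eqP h.
  have e : r' (ph x) = r' (ph y).
    by rewrite -(mixdiv (r' (ph x)) K0 (dK x)) -(mixdiv (r' (ph y)) K0 (dK y)) -/(r x) -/(r y) h.
  case: (boolP ((x \in M) && (y \in M))) => [/andP [xM yM] | nb].
    move: h; rewrite /r /ph /d xM yM => /addnI /eqP; apply/negP; exact: gMi.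
  by move: (g'i _ _ (phS x xS) (phS y yS) (phne x y xy nb)); rewrite e eqxx.
move=> x y z xS yS zS hxy hyz cxy.
have xy : x != y by apply: contraTneq hxy => ->; rewrite ltnn.
have yz : y != z by apply: contraTneq hyz => ->; rewrite ltnn.
have xz : x != z by apply: contraTneq (ltn_trans hxy hyz) => ->; rewrite ltnn.
have gen : ~~ ((x \in M) && (y \in M)) -> ~~ ((y \in M) && (z \in M)) ->
    ~~ ((x \in M) && (z \in M)) -> c x z = c x y.
  move=> n1 n2 n3.
  rewrite -(cph x z xS zS xz n3) -(cph x y xS yS xy n1).
  apply: g't; try exact: phS; [exact: rlt | exact: rlt | ].
  by rewrite (cph x y xS yS xy n1) (cph y z yS zS yz n2).
case xM: (x \in M); case yM: (y \in M); case zM: (z \in M);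
  try (by apply: gen; rewrite ?xM ?yM ?zM).
- apply: gMt => //; exact: rM2.
- have zx : z != x by rewrite eq_sym.
  have zy : z != y by rewrite eq_sym.
  rewrite (hs _ _ xz) (hm z x y zS (negbT zM) xM yM) -(hs _ _ yz) -cxy //.
- move: (rlt x y xS yS hxy); rewrite xM yM => /(_ isT).
  move: (rlt y z yS zS hyz); rewrite zM yM => /(_ isT).
  by rewrite /ph xM yM zM => h1 h2; move: (ltn_trans h1 h2); rewrite ltnn.
- by rewrite (hm x y z xS (negbT xM) yM zM).
Qed.

Lemma mainS (V : finType) k (c : V -> V -> 'I_k) :
  symc c -> nrb c -> (forall i, simple_perm_graph (color_class c i)) ->
  forall n (S : {set V}), #|S| <= n -> exists r, good c S r.
Proof.
move=> hs hn HP; elim=> [|n IH] S hcard.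
  exists (fun _ => 0); split => // x y xS.
  have : 0 < #|S| by apply/card_gt0P; exists x.
  by rewrite leqn0 in hcard; rewrite (eqP hcard).
case: (classic (exists col x0 y0 z, emod c S col x0 y0 /\ z \in S /\
                  ~ connect (emod c S col) x0 z)); last first.
  move=> H; apply: twocol => //; apply: (lemmaL hs hn (leqnn _)).
  move=> col x0 y0 z h1 h2; apply: NNPP => h3; apply: H.
  by exists col, x0, y0, z.
move=> [col [x0 [y0 [z [e0 [zS nz]]]]]].
have [x0S y0S x0y0 _] := emod_in e0.
set X := [set y | connect (emod c S col) x0 y].
have XS : X \subset S by apply/subsetP => y; rewrite inE; apply: conn_sub.
have x0X : x0 \in X by rewrite inE connect0.
have y0X : y0 \in X by rewrite inE connect1.
have zX : z \notin X by rewrite inE; apply/negP.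
have cX : #|X| < #|S|.
  by apply: proper_card; apply/properP; split => //; exists z.
have cX2 : 2 <= #|X|.
  have : [set x0; y0] \subset X by apply/subsetP => y; rewrite in_set2 => /orP [] /eqP ->.
  by move/subset_leq_card; rewrite cards2 x0y0.
set S' := (S :\: X) :|: [set x0].
have cS' : #|S'| <= n.
  rewrite /S' setUC cardsU1 cardsD (setIidPr XS).
  move: (subset_leq_card XS); case: (x0 \notin S :\: X) => /=; lia.
case: (IH X ltac:(lia)) => rM gM.
case: (IH S' cS') => r' g'.
exact: (combine hs XS x0X (comp_mod (S := S) (col := col) (x0 := x0) hs hn) gM g').
Qed.

Definition rkn (T : finType) (prec : rel T) (x : T) := #|[set w | prec w x]|.

Lemma rkn_bound (T : finType) (prec : rel T) x : ~~ prec x x -> rkn prec x < #|T|.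
Proof.
move=> irr; rewrite -cardsT; apply: proper_card; apply/properP; split.
  by apply/subsetP => y; rewrite inE.
by exists x; rewrite ?inE.
Qed.

Lemma rkn_mono (T : finType) (prec : rel T) :
  (forall x, ~~ prec x x) -> (forall x y z, prec x y -> prec y z -> prec x z) ->
  forall x y, prec x y -> rkn prec x < rkn prec y.
Proof.
move=> irr tr x y pxy; apply: proper_card; apply/properP; split.
  by apply/subsetP => w; rewrite !inE => h; apply: tr h pxy.
by exists x; rewrite !inE // (negbTE (irr x)).
Qed.

Lemma rkn_iff (T : finType) (prec : rel T) :
  (forall x, ~~ prec x x) -> (forall x y z, prec x y -> prec y z -> prec x z) ->
  (forall x y, x != y -> prec x y || prec y x) ->
  forall x y, (rkn prec x < rkn prec y) = prec x y.
Proof.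
move=> irr tr tot x y; apply/idP/idP; last exact: rkn_mono.
case: (eqVneq x y) => [-> | xy]; first by rewrite ltnn.
case/orP: (tot x y xy) => // pyx h.
by move: (ltn_trans h (rkn_mono irr tr pyx)); rewrite ltnn.
Qed.

Lemma rkn_inj (T : finType) (prec : rel T) :
  (forall x, ~~ prec x x) -> (forall x y z, prec x y -> prec y z -> prec x z) ->
  (forall x y, x != y -> prec x y || prec y x) ->
  injective (rkn prec).
Proof.
move=> irr tr tot x y e; apply/eqP; apply/negP => /negP xy.
case/orP: (tot x y xy) => /(rkn_mono irr tr); rewrite e ltnn //.
Qed.

Theorem proposition4p14 (V : finType) (k : nat) (c : V -> V -> 'I_k) :
  complete_edge_colored c ->
  (forall i : 'I_k, simple_perm_graph (color_class c i)) ->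
  ~ (exists x y z : V, rainbow_triangle c x y z) ->
  complete_edge_colored_perm_graph c.
Proof.
move=> [hs _] HP Hnr.
have hn : nrb c := nrb_of Hnr.
have [r [ri rt]] := mainS hs hn HP (leqnn #|[set: V]|).
set pr := fun x y : V => r x < r y.
have pirr : forall x, ~~ pr x x by move=> x; rewrite /pr ltnn.
have ptr : forall x y z, pr x y -> pr y z -> pr x z by move=> x y z; apply: ltn_trans.
have ptot : forall x y, x != y -> pr x y || pr y x.
  by move=> x y xy; rewrite /pr -neq_ltn; apply: ri; rewrite ?inE.
set l := fun x => Ordinal (rkn_bound (pirr x)).
have hl : forall x y, (l x < l y) = (r x < r y) by move=> x y; exact: rkn_iff.
have linj : injective l.
  by move=> x y /(congr1 val) /= /(rkn_inj pirr ptr ptot).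
have lab : labeling l by apply: inj_card_bij linj _; rewrite card_ord.
have ltri : forall x y z, l x < l y -> l y < l z -> c x y = c y z -> c x z = c x y.
  by move=> x y z; rewrite !hl; apply: rt; rewrite inE.
have lne : forall x y, x != y -> (l x == l y :> nat) = false.
  by move=> x y xy; apply/negP => /eqP /val_inj /linj /eqP; apply/negP.
exists l; split => // i.
set E := color_class c i.
have Esym : forall u v, E u v = E v u.
  move=> u v; rewrite /E /color_class; case: (eqVneq u v) => [-> // | uv].
  by rewrite (hs _ _ uv).
set prec := fun u v => (u != v) && (if l u < l v then ~~ E u v else E u v).
have irr : forall x, ~~ prec x x by move=> x; rewrite /prec eqxx.
have tot : forall x y, x != y -> prec x y || prec y x.
  move=> x y xy; rewrite /prec xy eq_sym xy /=.
  case: (ltngtP (l x) (l y)) => h.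
  - by rewrite Esym orNb.
  - by rewrite Esym orbN.
  - by move: (lne x y xy); rewrite h eqxx.
have nocycmin : forall u v w, l u < l v -> l u < l w -> prec u v -> prec v w -> prec w u -> False.
  move=> u v w luv luw.
  have lwu : (l w < l u) = false by rewrite ltnNge (ltnW luw).
  rewrite /prec luv lwu /=.
  case/andP => uv; rewrite /E /color_class uv /= => cuv.
  case/andP => vw; rewrite vw /= => pvw.
  case/andP => wu; rewrite wu /= => /eqP cwu.
  have uw : u != w by rewrite eq_sym.
  rewrite (hs _ _ wu) in cwu.
  move: pvw; case: ifP => lvw.
    move=> cvw.
    case: (eqVneq (c u v) (c v w)) => [e | ne].
      by move: (ltri u v w luv lvw e); rewrite cwu => h; rewrite h eqxx in cuv.
    case: (hn u v w uv vw uw) => [h | [h | h]].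
    - by rewrite h eqxx in ne.
    - by rewrite h cwu eqxx in cvw.
    - by rewrite h cwu eqxx in cuv.
  move=> /eqP cvw.
  have lwv : l w < l v.
    by move: (lne v w vw); case: (ltngtP (l v) (l w)) => //; rewrite lvw.
  have e : c u w = c w v by rewrite cwu -(hs _ _ vw) cvw.
  by move: (ltri u w v luw lwv e); rewrite cwu => h; rewrite h eqxx in cuv.
have pne : forall x y, prec x y -> x != y by move=> x y /andP [].
have nocyc : forall u v w, prec u v -> prec v w -> prec w u -> False.
  move=> u v w puv pvw pwu.
  have d1 := lne u v (pne _ _ puv). have d2 := lne v w (pne _ _ pvw).
  have d3 := lne w u (pne _ _ pwu).
  have [[h1 h2] | [[h1 h2] | [h1 h2]]] :
    (l u < l v /\ l u < l w) \/ (l v < l w /\ l v < l u) \/ (l w < l u /\ l w < l v).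
    move: d1 d2 d3 => /negbT d1 /negbT d2 /negbT d3; lia.
  - exact: nocycmin puv pvw pwu.
  - exact: nocycmin pvw pwu puv.
  - exact: nocycmin pwu puv pvw.
have tr : forall x y z, prec x y -> prec y z -> prec x z.
  move=> x y z pxy pyz; case: (eqVneq x z) => [exz | xz].
    rewrite -exz in pyz; exfalso.
    move: pxy pyz; rewrite /prec => /andP [xy h1] /andP [_ h2].
    rewrite (Esym y x) in h2.
    case: (ltngtP (l x) (l y)) h1 h2 => h.
    - by move=> /negbTE ->.
    - by move=> ->.
    - by move: (lne x y xy); rewrite h eqxx.
  case/orP: (tot x z xz) => // pzx; exfalso; exact: nocyc pxy pyz pzx.
set q := fun u => Ordinal (rkn_bound (irr u)).
have hq : forall u v, (q u < q v) = prec u v by move=> u v; exact: rkn_iff.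
have qinj : injective q.
  by move=> x y /(congr1 val) /= /(rkn_inj irr tr tot).
case: lab => linv lK lKV.
set g := fun j => q (linv j).
have ginj : injective g by move=> j1 j2 /qinj /(congr1 l); rewrite !lKV.
exists (perm ginj)^-1%g => u v hvu.
rewrite invgK !permE /g !lK hq /prec ltnNge (ltnW hvu) /=.
by rewrite /E /color_class; case: (eqVneq u v).
Qed.
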